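(* Let $G$ be a countable abelian group, let $B$ be a Bohr neighborhood of $0$ in $G$, and let $c\in\mathbb Z$ be such that $cG$ has finite index in $G$. Then $cB=\{cb:b\in B\}$ contains a Bohr neighborhood of $0$ in $G$.
   Context: $G$ is discrete. A Bohr neighborhood of $0$ in $G$ is a set $\{g\in G:|\chi_i(g)-1|<\varepsilon,\ 1\le i\le r\}$ for some $r\in\mathbb N$, homomorphisms $\chi_1,\dots,\chi_r:G\to\{z\in\mathbb C:|z|=1\}$ and $\varepsilon>0$. $cG=\{cg:g\in G\}$. *)

(* Defs.v *)
From mathcomp Require Import all_boot all_algebra.
From Stdlib Require Import Reals.
From Coquelicot Require Complex.

Set Implicit Arguments.
Unset Strict Implicit.
Unset Printing Implicit Defensive.

Definition is_character (G : zmodType) (chi : G -> Complex.C) : Prop :=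
  (forall g : G, Complex.Cmod (chi g) = R1) /\
  (forall g h : G, chi (GRing.add g h) = Complex.Cmult (chi g) (chi h)).

Definition bohr_set (G : zmodType) (r : nat) (chi : nat -> G -> Complex.C)
  (eps : R) : G -> Prop :=
  fun g => forall i, (i < r)%N ->
    Rlt (Complex.Cmod (Complex.Cminus (chi i g) (Complex.RtoC R1))) eps.

Definition bohr_nbhd (G : zmodType) (B : G -> Prop) : Prop :=
  exists (r : nat) (chi : nat -> G -> Complex.C) (eps : R),
    (forall i, (i < r)%N -> is_character (chi i)) /\ Rlt R0 eps /\
    (forall g, B g <-> bohr_set r chi eps g).

Definition mul_subgroup (G : zmodType) (c : int) : G -> Prop :=
  fun g => exists h : G, g = intmul h c.

Definition finite_index (G : zmodType) (H : G -> Prop) : Prop :=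
  exists s : seq G, forall g : G, exists2 t, t \in s & H (GRing.add g (GRing.opp t)).

(* Main.v *)
Require Import Defs.
From HB Require Import structures.
From mathcomp Require Import all_boot all_algebra.
From Stdlib Require Import Reals.
From Coquelicot Require Complex.
From Stdlib Require Import Lra Lia ZArith ClassicalEpsilon.
From Coquelicot Require Import Complex.
Set Warnings "-notation-overridden,-ambiguous-paths,-parsing".

Module MA.
Local Open Scope R_scope.
Local Open Scope C_scope.
Local Open Scope R_scope.

Add Field C_field_inst : C_field_theory.

Definition cis (t : R) : C := (cos t, sin t).

Lemma Cmod_cis t : Cmod (cis t) = 1.
Proof.
unfold Cmod, cis; simpl.
replace (cos t * (cos t * 1) + sin t * (sin t * 1)) with ((sin t)² + (cos t)²)
  by (unfold Rsqr; ring).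
rewrite sin2_cos2; apply sqrt_1.
Qed.

Lemma cis_add a b : cis (a + b) = (cis a * cis b)%C.
Proof.
unfold cis, Cmult; simpl; rewrite cos_plus sin_plus; f_equal; ring.
Qed.

Lemma cis_0 : cis 0 = 1%C.
Proof. unfold cis; rewrite cos_0 sin_0; reflexivity. Qed.

Lemma cis_pow t k : (cis t ^ k)%C = cis (INR k * t).
Proof.
induction k as [|k IH]; simpl.
- rewrite Rmult_0_l cis_0; reflexivity.
- rewrite IH -cis_add; f_equal.
  destruct k; simpl; ring.
Qed.

Lemma cis_2PI_nat (m : nat) : cis (2 * PI * INR m) = 1%C.
Proof.
unfold cis. replace (2 * PI * INR m) with (0 + 2 * INR m * PI) by ring.
rewrite cos_period sin_period cos_0 sin_0; reflexivity.
Qed.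

Lemma cis_opp t : cis (- t) = Cconj (cis t).
Proof. unfold cis, Cconj; simpl; rewrite cos_neg sin_neg; reflexivity. Qed.

Lemma cis_2PI_Z (k : Z) : cis (2 * PI * IZR k) = 1%C.
Proof.
destruct (Z_le_gt_dec 0 k) as [H|H].
- rewrite -(Z2Nat.id k H) -INR_IZR_INZ; apply cis_2PI_nat.
- replace k with (- Z.of_nat (Z.to_nat (- k)))%Z by lia.
  rewrite opp_IZR -INR_IZR_INZ.
  replace (2 * PI * - INR (Z.to_nat (- k))) with (- (2 * PI * INR (Z.to_nat (- k)))) by ring.
  rewrite cis_opp cis_2PI_nat; apply injective_projections; simpl; ring.
Qed.

Lemma polar w : Cmod w = 1 -> exists t, w = cis t.
Proof.
destruct w as [a b]; unfold Cmod; simpl; intros H.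
assert (H2 : a * a + b * b = 1).
{ have H0 : 0 <= a * (a * 1) + b * (b * 1) by nra.
  have := sqrt_sqrt _ H0. rewrite H. lra. }
assert (Ha : -1 <= a <= 1) by nra.
destruct (Rle_dec 0 b) as [Hb|Hb].
- exists (acos a). unfold cis. rewrite cos_acos // sin_acos //.
  f_equal. rewrite -(sqrt_Rsqr b); last lra. f_equal. unfold Rsqr; lra.
- exists (- acos a). unfold cis. rewrite cos_neg sin_neg cos_acos // sin_acos //.
  f_equal. have -> : b = - (- b) by ring. f_equal. rewrite -(sqrt_Rsqr (- b)); last lra. f_equal. unfold Rsqr; lra.
Qed.

Lemma Cmod_cis_sub1 t : Cmod (cis t - 1) = sqrt (2 - 2 * cos t).
Proof.
unfold Cmod, cis; simpl; f_equal.
pose proof (sin2_cos2 t) as H; unfold Rsqr in H. nra.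
Qed.

Definition zeta (n j : nat) : C := cis (2 * PI * INR j / INR n).

Lemma cos_abs x : cos x = cos (Rabs x).
Proof. unfold Rabs; destruct (Rcase_abs x); [rewrite cos_neg|]; reflexivity. Qed.

Lemma cos_le_shrink u v : Rabs v <= Rabs u -> Rabs u <= PI -> cos u <= cos v.
Proof.
intros H1 H2. rewrite (cos_abs u) (cos_abs v).
apply cos_decr_1; try lra; apply Rabs_pos.
Qed.

Lemma Cmod_mult_unit_l z w : Cmod z = 1 -> Cmod (z * w) = Cmod w.
Proof. intros H; rewrite Cmod_mult H; ring. Qed.

Lemma root_approx n w : (0 < n)%nat -> Cmod w = 1 ->
  exists j, (j < n)%nat /\ Cmod (w - zeta n j) <= Cmod (w ^ n - 1).
Proof.
intros Hn Hw. destruct (polar w Hw) as [t ->].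
have Hn' : 0 < INR n by apply lt_0_INR; apply/ltP.
set x := (INR n * t + PI) / (2 * PI).
destruct (archimed x) as [A1 A2].
set k := (up x - 1)%Z.
have Hk : IZR k = IZR (up x) - 1 by rewrite /k minus_IZR.
have HPI := PI_RGT_0.
have B1 : 2 * PI * IZR k <= INR n * t + PI.
{ have : IZR k <= x by lra. rewrite /x => H.
  apply (Rmult_le_compat_l (2 * PI)) in H; last lra.
  rewrite /Rdiv in H. rewrite -> (Rmult_comm (INR n * t + PI)) in H.
  rewrite -Rmult_assoc Rinv_r in H; lra. }
have B2 : INR n * t - PI < 2 * PI * IZR k.
{ have : x - 1 < IZR k by lra. rewrite /x => H.
  apply (Rmult_lt_compat_l (2 * PI)) in H; last lra.
  rewrite Rmult_minus_distr_l /Rdiv in H.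
  rewrite -> (Rmult_comm (INR n * t + PI)) in H.
  rewrite -Rmult_assoc Rinv_r in H; lra. }
set u := INR n * t - 2 * PI * IZR k.
have Hu : Rabs u <= PI by apply Rabs_le; rewrite /u; lra.
have Hn2 : (0 < n)%coq_nat by apply/ltP.
have HnZ : (0 < Z.of_nat n)%Z by lia.
exists (Z.to_nat (k mod Z.of_nat n)). split.
{ have := Z.mod_pos_bound k (Z.of_nat n) HnZ. move=> [? ?]. apply/ltP. lia. }
have Hz : zeta n (Z.to_nat (k mod Z.of_nat n)) = cis (2 * PI * IZR k / INR n).
{ rewrite /zeta INR_IZR_INZ Z2Nat.id; last by have := Z.mod_pos_bound k (Z.of_nat n) HnZ; lia.
  rewrite [in RHS](Z_div_mod_eq_full k (Z.of_nat n)) plus_IZR mult_IZR -INR_IZR_INZ.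
  replace (2 * PI * (INR n * IZR (k / Z.of_nat n) + IZR (k mod Z.of_nat n)) / INR n)
    with (2 * PI * IZR (k mod Z.of_nat n) / INR n + 2 * PI * IZR (k / Z.of_nat n))
    by (field; lra).
  rewrite cis_add cis_2PI_Z. ring. }
rewrite Hz.
have E1 : cis t = (cis (2 * PI * IZR k / INR n) * cis (u / INR n))%C.
{ rewrite -cis_add. f_equal. rewrite /u. field. lra. }
have E2 : (cis t ^ n)%C = cis u.
{ rewrite cis_pow. have -> : INR n * t = u + 2 * PI * IZR k by rewrite /u; ring.
  rewrite cis_add cis_2PI_Z. ring. }
rewrite E2 E1.
replace (cis (2 * PI * IZR k / INR n) * cis (u / INR n) - cis (2 * PI * IZR k / INR n))%C
  with (cis (2 * PI * IZR k / INR n) * (cis (u / INR n) - 1))%C by ring.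
rewrite Cmod_mult_unit_l; last by apply Cmod_cis.
rewrite !Cmod_cis_sub1. apply sqrt_le_1_alt.
have : cos u <= cos (u / INR n).
{ apply cos_le_shrink; last lra.
  rewrite /Rdiv Rabs_mult (Rabs_pos_eq (/ INR n)); last by left; apply Rinv_0_lt_compat.
  have : 1 <= INR n by apply (le_INR 1); apply/leP.
  move=> H1. have H3 : / INR n <= 1.
  { rewrite -Rinv_1. apply Rinv_le_contravar; lra. }
  have := Rabs_pos u. have := Rinv_0_lt_compat _ Hn'. nra. }
lra.
Qed.

End MA.
Import MA.

Module MB.
Set Implicit Arguments.
Unset Strict Implicit.
Delimit Scope ring_scope with G.
Local Open Scope R_scope.
Import GRing.Theory.

Definition subgrp (G : zmodType) (H : G -> Prop) : Prop :=
  H 0%G /\ forall x y, H x -> H y -> H (x - y)%G.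

Definition char_on (G : zmodType) (H : G -> Prop) (w : G -> C) : Prop :=
  (forall g, H g -> Cmod (w g) = 1) /\
  (forall g h, H g -> H h -> w (g + h)%G = (w g * w h)%C).

Lemma subgrpN (G : zmodType) (H : G -> Prop) x : subgrp H -> H x -> H (- x)%G.
Proof. move=> [H0 HB] Hx. rewrite -sub0r. by apply HB. Qed.

Lemma subgrpD (G : zmodType) (H : G -> Prop) x y : subgrp H -> H x -> H y -> H (x + y)%G.
Proof.
move=> HH Hx Hy. rewrite -(opprK y). apply HH.2 => //. by apply subgrpN.
Qed.

Lemma subgrpMn (G : zmodType) (H : G -> Prop) x k : subgrp H -> H x -> H (x *+ k)%G.
Proof.
move=> HH Hx. elim: k => [|k IH]; first by rewrite mulr0n; apply HH.1.
rewrite mulrS. apply: subgrpD => //.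
Qed.

Lemma unit_nz z : Cmod z = 1 -> z <> 0%C.
Proof. move=> H E. rewrite E Cmod_0 in H. lra. Qed.

Lemma char0 (G : zmodType) (H : G -> Prop) w : subgrp H -> char_on H w -> w 0%G = 1%C.
Proof.
move=> HH [Hm Hw]. have H0 := HH.1.
have E := Hw _ _ H0 H0. rewrite addr0 in E.
have Hn := unit_nz (Hm _ H0).
transitivity (w 0%G * w 0%G / w 0%G)%C; first by field.
rewrite -E. by field.
Qed.

Lemma charMn (G : zmodType) (H : G -> Prop) w x k : subgrp H -> char_on H w -> H x ->
  w (x *+ k)%G = (w x ^ k)%C.
Proof.
move=> HH Hc Hx. elim: k => [|k IH]; first by rewrite mulr0n (char0 HH Hc).
rewrite mulrS Cpow_S Hc.2 //; last by apply: subgrpMn.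
by rewrite IH.
Qed.

Lemma charN (G : zmodType) (H : G -> Prop) w x : subgrp H -> char_on H w -> H x ->
  (w (- x)%G * w x)%C = 1%C.
Proof.
move=> HH Hc Hx. rewrite -Hc.2 //; last by apply: subgrpN.
by rewrite addNr (char0 HH Hc).
Qed.

Lemma charB (G : zmodType) (H : G -> Prop) w x y : subgrp H -> char_on H w -> H x -> H y ->
  (w (x - y)%G * w y)%C = w x.
Proof.
move=> HH Hc Hx Hy. rewrite -Hc.2 //; last by apply HH.2.
by rewrite subrK.
Qed.

Definition adj (G : zmodType) (H : G -> Prop) (t : G) : G -> Prop :=
  fun g => exists p : G * nat, H p.1 /\ g = (p.1 + t *+ p.2)%G.

Lemma ext_key (G : zmodType) (H : G -> Prop) w t m z :
  subgrp H -> char_on H w -> (0 < m)%nat -> H (t *+ m)%G ->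
  (forall j, (0 < j < m)%nat -> ~ H (t *+ j)%G) -> (z ^ m)%C = w (t *+ m)%G ->
  forall h k h' k', H h -> H h' -> (h + t *+ k = h' + t *+ k')%G ->
  (w h * z ^ k)%C = (w h' * z ^ k')%C.
Proof.
move=> HH Hc Hm Htm Hmin Hz.
have main : forall h k h' k', H h -> H h' -> (h + t *+ k = h' + t *+ k')%G -> (k' <= k)%nat ->
  (w h * z ^ k)%C = (w h' * z ^ k')%C.
{ move=> h k h' k' Hh Hh' E Hle.
  set d := (k - k')%nat.
  have Ek : k = (k' + d)%nat by rewrite /d subnKC.
  have Eh' : h' = (h + t *+ d)%G.
  { apply: (addIr (t *+ k')%G). rewrite -E Ek mulrnDr. by rewrite addrAC addrA. }
  have Hd : H (t *+ d)%G.
  { have -> : (t *+ d = h' - h)%G by rewrite Eh' addrAC subrr add0r.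
    by apply HH.2. }
  have Ed := divn_eq d m.
  set q := (d %/ m)%nat in Ed. set r := (d %% m)%nat in Ed.
  have Hr : H (t *+ r)%G.
  { have -> : (t *+ r = t *+ d - (t *+ m) *+ q)%G.
    { by rewrite Ed mulnC mulrnDr mulrnA addrAC subrr add0r. }
    apply HH.2 => //. by apply: subgrpMn. }
  have r0 : r = 0%N.
  { case: (posnP r) => // Hpos. exfalso. apply: (Hmin r) => //.
    by rewrite Hpos /r ltn_pmod. }
  rewrite r0 addn0 in Ed.
  have Zd : (z ^ d)%C = ((z ^ m) ^ q)%C by rewrite Ed mulnC; apply Cpow_mult_r.
  have Td : (t *+ d = (t *+ m) *+ q)%G by rewrite Ed mulnC mulrnA.
  rewrite Eh' Hc.2 // Td (charMn _ HH Hc Htm) -Hz Ek Cpow_add_r Zd. ring. }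
move=> h k h' k' Hh Hh' E.
case: (leqP k' k) => Hle; first by apply: main.
symmetry. apply: main => //. by apply ltnW.
Qed.

Definition extw (G : zmodType) (H : G -> Prop) (w : G -> C) (t : G) (z : C) (g : G) : C :=
  match ClassicalEpsilon.excluded_middle_informative (adj H t g) with
  | left e => let p := proj1_sig (ClassicalEpsilon.constructive_indefinite_description _ e) in
              (w p.1 * z ^ p.2)%C
  | right _ => 1%C
  end.

Lemma extw_eq (G : zmodType) (H : G -> Prop) w t m z :
  subgrp H -> char_on H w -> (0 < m)%nat -> H (t *+ m)%G ->
  (forall j, (0 < j < m)%nat -> ~ H (t *+ j)%G) -> (z ^ m)%C = w (t *+ m)%G ->
  forall h k, H h -> extw H w t z (h + t *+ k)%G = (w h * z ^ k)%C.
Proof.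
move=> HH Hc Hm Htm Hmin Hz h k Hh. rewrite /extw.
case: ClassicalEpsilon.excluded_middle_informative => [e|ne].
- case: ClassicalEpsilon.constructive_indefinite_description => [[h' k'] /= [Hh' E]].
  symmetry. by apply: (ext_key HH Hc Hm Htm Hmin Hz).
- exfalso. apply: ne. by exists (h, k).
Qed.

Lemma ext_step (G : zmodType) (H : G -> Prop) w t m z :
  subgrp H -> char_on H w -> (0 < m)%nat -> H (t *+ m)%G ->
  (forall j, (0 < j < m)%nat -> ~ H (t *+ j)%G) -> Cmod z = 1 -> (z ^ m)%C = w (t *+ m)%G ->
  [/\ subgrp (adj H t), char_on (adj H t) (extw H w t z),
      (forall g, H g -> adj H t g), (forall g, H g -> extw H w t z g = w g)
    & extw H w t z t = z].
Proof.
move=> HH Hc Hm Htm Hmin Hz1 Hz.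
have E := extw_eq HH Hc Hm Htm Hmin Hz.
have Hsub : forall g, H g -> adj H t g.
{ move=> g Hg. exists (g, 0%nat) => /=. by rewrite mulr0n addr0. }
have Hadd : forall x y, adj H t x -> adj H t y -> adj H t (x + y)%G.
{ move=> x y [[h1 k1] /= [H1 ->]] [[h2 k2] /= [H2 ->]].
  exists ((h1 + h2)%G, (k1 + k2)%nat) => /=. split; first by apply: subgrpD.
  by rewrite mulrnDr addrACA. }
have Hopp : forall x, adj H t x -> adj H t (- x)%G.
{ move=> x [[h2 k2] /= [H2 ->]].
  case: m Hm Htm Hmin Hz E => [//|m'] _ Htm Hmin Hz E.
  exists ((- h2 - (t *+ m'.+1) *+ k2)%G, (m' * k2)%nat) => /=. split.
  - apply HH.2; first by apply: subgrpN. by apply: subgrpMn.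
  - by rewrite -mulrnA mulSn mulrnDr [in RHS]opprD addrA subrK opprD. }
have HS : subgrp (adj H t).
{ split; first by apply Hsub; apply HH.1.
  move=> x y Hx Hy. apply Hadd => //. by apply Hopp. }
split => //.
- split.
  + move=> g [[h k] /= [Hh ->]]. rewrite E // Cmod_mult Cmod_pow Hz1 Hc.1 // pow1. ring.
  + move=> x y [[h1 k1] /= [H1 ->]] [[h2 k2] /= [H2 ->]].
    have -> : (h1 + t *+ k1 + (h2 + t *+ k2) = (h1 + h2) + t *+ (k1 + k2))%G
      by rewrite mulrnDr addrACA.
    rewrite !E //; last by apply: subgrpD.
    rewrite Hc.2 // Cpow_add_r. ring.
- move=> g Hg. have := E g 0%nat Hg. rewrite mulr0n addr0 /= => ->.
  ring.
- have := E 0%G 1%nat HH.1. rewrite mulr1n add0r => ->.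
  rewrite (char0 HH Hc) Cpow_1_r. ring.
Qed.

Lemma nroot w m : (0 < m)%nat -> Cmod w = 1 -> exists z, Cmod z = 1 /\ (z ^ m)%C = w.
Proof.
move=> Hm Hw. have [t ->] := polar _ Hw.
have Hm' : 0 < INR m by apply lt_0_INR; apply/ltP.
exists (cis (t / INR m)). split; first by apply Cmod_cis.
rewrite cis_pow. f_equal. field. lra.
Qed.

Lemma min_order (G : zmodType) (H : G -> Prop) t n : (0 < n)%nat -> H (t *+ n)%G ->
  exists m, [/\ (0 < m)%nat, H (t *+ m)%G & forall j, (0 < j < m)%nat -> ~ H (t *+ j)%G].
Proof.
move=> Hn Htn.
pose P j := if excluded_middle_informative ((0 < j)%nat /\ H (t *+ j)%G) then true else false.
have PE : forall j, P j <-> ((0 < j)%nat /\ H (t *+ j)%G).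
{ move=> j; rewrite /P; case: excluded_middle_informative => //. }
have ex : exists j, P j by exists n; apply PE.
case: (ex_minnP ex) => m /PE [Hm Htm] Hmin.
exists m; split => // j /andP [Hj Hjm] Hj'.
have := Hmin j (proj2 (PE j) (conj Hj Hj')). by rewrite leqNgt Hjm.
Qed.

Lemma adjoin (G : zmodType) (H : G -> Prop) w t : subgrp H -> char_on H w ->
  (exists n, (0 < n)%nat /\ H (t *+ n)%G) ->
  exists H' w', [/\ subgrp H', char_on H' w', (forall g, H g -> H' g),
     (forall g, H g -> w' g = w g) & H' t].
Proof.
move=> HH Hc [n [Hn Htn]].
have [m [Hm Htm Hmin]] := min_order Hn Htn.
have [z [Hz1 Hz]] := nroot Hm (Hc.1 _ Htm).
have [S1 S2 S3 S4 S5] := ext_step HH Hc Hm Htm Hmin Hz1 Hz.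
exists (adj H t), (extw H w t z); split => //.
exists (0%G, 1%nat) => /=. split; [apply HH.1 | by rewrite mulr1n add0r].
Qed.

Lemma ext_all (G : zmodType) (s : seq G) : forall (H : G -> Prop) w,
  subgrp H -> char_on H w ->
  (forall g, exists n, (0 < n)%nat /\ H (g *+ n)%G) ->
  (forall g, H g \/ exists2 t, t \in s & H (g - t)%G) ->
  exists th, char_on (fun _ => True) th /\ forall g, H g -> th g = w g.
Proof.
elim: s => [|t s IH] H w HH Hc Hord Hcov.
- have Hall : forall g, H g by move=> g; case: (Hcov g) => // [[t]].
  exists w. split => //.
  split => [g _|g h _ _]; first by apply Hc.1.
  by apply Hc.2.
- have [H' [w' [HH' Hc' Hsub Hext Ht]]] := adjoin HH Hc (Hord t).
  have Hord' : forall g, exists n, (0 < n)%nat /\ H' (g *+ n)%G.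
  { move=> g. have [n [? ?]] := Hord g. exists n; split => //. by apply Hsub. }
  have Hcov' : forall g, H' g \/ exists2 t, t \in s & H' (g - t)%G.
  { move=> g. case: (Hcov g) => [Hg|[t' Ht' Hg]]; first by left; apply Hsub.
    move: Ht'; rewrite in_cons => /orP [/eqP E|Ht'].
    - left. subst t'. have -> : g = (g - t + t)%G by rewrite subrK.
      apply: subgrpD => //. by apply Hsub.
    - right. exists t' => //. by apply Hsub. }
  have [th [Hth Hth']] := IH H' w' HH' Hc' Hord' Hcov'.
  exists th; split => // g Hg. rewrite Hth'; [by apply Hext | by apply Hsub].
Qed.

Lemma Cmod_zeta n j : Cmod (zeta n j) = 1.
Proof. apply Cmod_cis. Qed.

Lemma zeta_pow_n n j : (0 < n)%nat -> (zeta n j ^ n)%C = 1%C.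
Proof.
move=> Hn. have Hn' : 0 < INR n by apply lt_0_INR; apply/ltP.
rewrite /zeta cis_pow.
have -> : INR n * (2 * PI * INR j / INR n) = 2 * PI * INR j by field; lra.
apply cis_2PI_nat.
Qed.

Lemma zeta1_neq1 m : (1 < m)%nat -> zeta m 1 <> 1%C.
Proof.
move=> Hm E. have Hm' : 2 <= INR m by apply (le_INR 2); apply/leP.
have HPI := PI_RGT_0.
have E1 : cos (2 * PI * INR 1 / INR m) = 1 by have := f_equal fst E; rewrite /zeta /cis.
have : cos (2 * PI * INR 1 / INR m) < cos 0.
{ apply cos_decreasing_1; try lra; simpl INR.
  - apply Rmult_le_pos; [lra | left; apply Rinv_0_lt_compat; lra].
  - have : / INR m <= / 2 by apply Rinv_le_contravar; lra.
    rewrite /Rdiv; nra.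
  - apply Rmult_lt_0_compat; [lra | apply Rinv_0_lt_compat; lra]. }
rewrite cos_0 E1. lra.
Qed.

Lemma separate (G : zmodType) (s : seq G) (H : G -> Prop) x :
  subgrp H ->
  (forall g, exists n, (0 < n)%nat /\ H (g *+ n)%G) ->
  (forall g, H g \/ exists2 t, t \in s & H (g - t)%G) ->
  ~ H x ->
  exists th, [/\ char_on (fun _ => True) th, (forall g, H g -> th g = 1%C) & th x <> 1%C].
Proof.
move=> HH Hord Hcov Hx.
pose w := fun _ : G => 1%C.
have Hc : char_on H w.
{ split => [g _|g h _ _]; rewrite /w; [apply Cmod_1 | ring]. }
have [n [Hn Hxn]] := Hord x.
have [m [Hm Hxm Hmin]] := min_order Hn Hxn.
have Hm1 : (1 < m)%nat.
{ by case: m Hm Hxm Hmin => [|[|m']]. }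
have Hz1 := Cmod_zeta m 1.
have Hz : (zeta m 1 ^ m)%C = w (x *+ m)%G by rewrite zeta_pow_n.
have [S1 S2 S3 S4 S5] := ext_step HH Hc Hm Hxm Hmin Hz1 Hz.
have Hord' : forall g, exists n, (0 < n)%nat /\ adj H x (g *+ n)%G.
{ move=> g. have [k [? ?]] := Hord g. exists k; split => //. by apply S3. }
have Hcov' : forall g, adj H x g \/ exists2 t, t \in s & adj H x (g - t)%G.
{ move=> g. case: (Hcov g) => [Hg|[t' Ht' Hg]]; first by left; apply S3.
  right. exists t' => //. by apply S3. }
have [th [Hth Hth']] := ext_all S1 S2 Hord' Hcov'.
exists th; split => //.
- move=> g Hg. rewrite Hth'; last by apply S3. by rewrite S4.
- rewrite Hth'; first by rewrite S5; apply zeta1_neq1.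
  exists (0%G, 1%nat) => /=. split; [apply HH.1 | by rewrite mulr1n add0r].
Qed.

End MB.
Import MB.

Module MC.
Set Implicit Arguments.
Unset Strict Implicit.
Delimit Scope ring_scope with G.
Local Open Scope R_scope.
Import GRing.Theory.

Lemma Cmult_1_r' (x : C) : (x * 1)%C = x. Proof. ring. Qed.
HB.instance Definition _ := Monoid.isComLaw.Build C 1%C Cmult Cmult_assoc Cmult_comm Cmult_1_l.

Notation "\cprod_ ( i < r ) F" := (\big[Cmult/RtoC 1]_(i < r) F) (at level 41, F at level 41, i, r at level 50).

Lemma unit_mul a b : Cmod a = 1 -> Cmod b = 1 -> Cmod (a * b) = 1.
Proof. move=> Ha Hb; rewrite Cmod_mult Ha Hb; ring. Qed.

Lemma unit_pow a k : Cmod a = 1 -> Cmod (a ^ k) = 1.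
Proof. move=> Ha; rewrite Cmod_pow Ha pow1 //. Qed.

Lemma unit_prod r (F : 'I_r -> C) : (forall i, Cmod (F i) = 1) -> Cmod (\cprod_(i < r) F i) = 1.
Proof.
move=> HF. apply: (big_ind (fun x => Cmod x = 1)) => //; first by apply Cmod_1.
move=> x y; apply unit_mul.
Qed.

Lemma diff_mul a b c d : Cmod b = 1 -> Cmod c = 1 ->
  Cmod (a * b - c * d) <= Cmod (a - c) + Cmod (b - d).
Proof.
move=> Hb Hc.
replace (a * b - c * d)%C with ((a - c) * b + c * (b - d))%C by ring.
eapply Rle_trans; first by apply Cmod_triangle.
rewrite !Cmod_mult Hb Hc. lra.
Qed.

Lemma diff_pow a c k : Cmod a = 1 -> Cmod c = 1 ->
  Cmod (a ^ k - c ^ k) <= INR k * Cmod (a - c).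
Proof.
move=> Ha Hc. elim: k => [|k IH].
- rewrite /= Rmult_0_l. replace (RtoC 1 - RtoC 1)%C with (RtoC 0) by ring. rewrite Cmod_0; lra.
- rewrite !Cpow_S S_INR.
  eapply Rle_trans; first by apply diff_mul => //; apply unit_pow.
  lra.
Qed.

Lemma approx_prod r (F G : 'I_r -> C) (m : 'I_r -> nat) n e :
  (forall i, Cmod (F i) = 1) -> (forall i, Cmod (G i) = 1) -> (forall i, (m i <= n)%nat) ->
  (forall i, Cmod (F i - G i) <= e) ->
  Cmod (\cprod_(i < r) (F i ^ m i) - \cprod_(i < r) (G i ^ m i))%C <= INR r * INR n * e.
Proof.
elim: r F G m => [|r IH] F G m HF HG Hm He.
- rewrite !big_ord0. replace (RtoC 1 - RtoC 1)%C with (RtoC 0) by ring. rewrite Cmod_0 /=; lra.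
- rewrite !big_ord_recr.
  have He0 : 0 <= e by apply: Rle_trans (He ord0); apply Cmod_ge_0.
  eapply Rle_trans.
  { apply diff_mul; [apply unit_pow; apply HF | apply unit_prod => i; apply unit_pow; apply HG]. }
  have IH' := IH (fun i => F (widen_ord (leqnSn r) i)) (fun i => G (widen_ord (leqnSn r) i))
    (fun i => m (widen_ord (leqnSn r) i)) (fun i => HF _) (fun i => HG _) (fun i => Hm _) (fun i => He _).
  have D1 := diff_pow (m ord_max) (HF ord_max) (HG ord_max).
  have D2 : INR (m ord_max) * Cmod (F ord_max - G ord_max) <= INR n * e.
  { apply Rmult_le_compat; [apply pos_INR | apply Cmod_ge_0 | apply le_INR; apply/leP; apply Hm | apply He]. }
  rewrite S_INR. have -> : (INR r + 1) * INR n * e = INR r * INR n * e + INR n * e by ring. apply: Rle_trans (Rplus_le_compat _ _ _ _ IH' (Rle_trans _ _ _ D1 D2)) _. lra.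
Qed.

Lemma zeta_add n a b : zeta n (a + b) = (zeta n a * zeta n b)%C.
Proof. rewrite /zeta -cis_add plus_INR. f_equal. rewrite /Rdiv. ring. Qed.

Lemma zeta_0 n : zeta n 0 = RtoC 1.
Proof. rewrite /zeta /= Rmult_0_r /Rdiv Rmult_0_l. apply cis_0. Qed.

Lemma zeta_pow n a k : (zeta n a ^ k)%C = zeta n (a * k).
Proof. rewrite /zeta cis_pow mult_INR. f_equal. rewrite /Rdiv. ring. Qed.

Lemma zeta_mod n a : (0 < n)%nat -> zeta n (a %% n) = zeta n a.
Proof.
move=> Hn. rewrite {2}(divn_eq a n) addnC zeta_add.
have -> : zeta n (a %/ n * n) = RtoC 1.
{ by rewrite -zeta_pow zeta_pow_n. }
ring.
Qed.

Lemma root_exact n w : (0 < n)%nat -> Cmod w = 1 -> (w ^ n)%C = RtoC 1 ->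
  exists j, (j < n)%nat /\ w = zeta n j.
Proof.
move=> Hn Hw Hwn. have [j [Hj Hd]] := root_approx _ _ Hn Hw.
exists j; split => //.
rewrite Hwn in Hd. replace (RtoC 1 - RtoC 1)%C with (RtoC 0) in Hd by ring.
rewrite Cmod_0 in Hd. have := Cmod_ge_0 (w - zeta n j)%C => H0.
have E : Cmod (w - zeta n j) = 0 by lra.
have := Cmod_eq_0 _ E => E2.
replace w with ((w - zeta n j) + zeta n j)%C by ring. rewrite E2. ring.
Qed.

Definition zz (n : nat) (x : 'Z_n) : C := zeta n (x : nat).

Lemma val_Zp_add n (x y : 'Z_n) : (1 < n)%nat -> ((x + y)%G : nat) = ((x + y) %% n)%nat.
Proof.
move=> Hn. have E : forall k, (k %% (Zp_trunc n).+2 = k %% n)%nat by move=> k; rewrite Zp_cast.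
by rewrite /= E.
Qed.

Lemma zz_add n (x y : 'Z_n) : (1 < n)%nat -> zz (x + y)%G = (zz x * zz y)%C.
Proof.
move=> Hn. rewrite /zz val_Zp_add // zeta_mod; last by apply: ltnW.
apply zeta_add.
Qed.

Lemma zz_inZp n j : (1 < n)%nat -> zz (inZp j : 'Z_n) = zeta n j.
Proof.
move=> Hn. have E : forall k, (k %% (Zp_trunc n).+2 = k %% n)%nat by move=> k; rewrite Zp_cast.
rewrite /zz /= E zeta_mod //. by apply: ltnW.
Qed.

Lemma zz_0 n : zz (0 : 'Z_n)%G = RtoC 1.
Proof. apply zeta_0. Qed.

Definition Zvec (r n : nat) := {ffun 'I_r -> 'Z_n}.

Definition evec (r n : nat) (i : 'I_r) : Zvec r n := [ffun j => if j == i then 1%G else 0%G].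

Lemma subgrpT (G : zmodType) : subgrp (fun _ : G => True).
Proof. by split. Qed.

Lemma vec_decomp (r n : nat) (y : Zvec r n) :
  y = (\sum_(i < r) evec n i *+ (y i : nat))%G.
Proof.
apply/ffunP => j. rewrite sum_ffunE (bigD1 j) //= big1 ?addr0.
- rewrite ffunMnE ffunE eqxx. by rewrite natr_Zp.
- move=> i Hij. rewrite ffunMnE ffunE eq_sym (negbTE Hij). by rewrite mul0rn.
Qed.

Lemma char_decomp (r n : nat) (th : Zvec r n -> C) (y : Zvec r n) :
  char_on (fun _ => True) th ->
  th y = \cprod_(i < r) (th (evec n i) ^ (y i : nat))%C.
Proof.
move=> Hc. rewrite {1}(vec_decomp y).
rewrite (big_morph th (id1 := RtoC 1) (op1 := Cmult)).
- apply eq_bigr => i _. by apply: (charMn _ (subgrpT _) Hc).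
- move=> a b. by apply Hc.2.
- by apply: (char0 (subgrpT _) Hc).
Qed.

End MC.
Import MC.

Module MD.
Set Implicit Arguments.
Unset Strict Implicit.
Delimit Scope ring_scope with G.
Local Open Scope R_scope.
Import GRing.Theory.

Lemma fchoice (A B : Type) (P : A -> B -> Prop) : (forall x, exists y, P x y) ->
  exists f : A -> B, forall x, P x (f x).
Proof.
move=> H. exists (fun x => proj1_sig (constructive_indefinite_description _ (H x))).
move=> x. exact: proj2_sig (constructive_indefinite_description _ (H x)).
Qed.

Lemma posmin p (f : nat -> R) : (forall i, (i < p)%nat -> 0 < f i) ->
  exists d, 0 < d /\ forall i, (i < p)%nat -> d <= f i.
Proof.
elim: p => [|p IH] Hf.
- exists 1; split => [|i]; [lra | by []].
- have [d [Hd Hd']] : exists d, 0 < d /\ forall i, (i < p)%nat -> d <= f i.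
  { apply IH => i Hi. apply Hf. by apply: ltnW. }
  exists (Rmin d (f p)). split.
  + apply Rmin_pos => //. by apply Hf.
  + move=> i. rewrite ltnS leq_eqVlt => /orP [/eqP ->|Hi].
    * apply Rmin_r.
    * apply: Rle_trans (Hd' _ Hi). apply Rmin_l.
Qed.

Lemma is_char_on (G : zmodType) (chi : G -> C) : is_character chi <-> char_on (fun _ => True) chi.
Proof.
split => [[H1 H2]|[H1 H2]]; split => *; [by apply H1 | by apply H2 | by apply H1 | by apply H2].
Qed.

End MD.
Import MD.

Module ME.
Set Implicit Arguments.
Unset Strict Implicit.
Delimit Scope ring_scope with G.
Local Open Scope R_scope.
Import GRing.Theory.

Lemma Ymuln (r n : nat) (y : Zvec r n) : (1 < n)%nat -> (y *+ n)%G = 0%G.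
Proof.
move=> Hn. apply/ffunP => i. rewrite ffunMnE ffunE.
by rewrite -mulr_natr pchar_Zp // mulr0.
Qed.

Lemma cmod_shift (x y z : C) : Cmod y = 1 -> (x * y)%C = z -> Cmod (x - RtoC 1)%C = Cmod (z - y)%C.
Proof.
move=> Hy <-. replace (x * y - y)%C with (y * (x - RtoC 1))%C by ring.
rewrite Cmod_mult Hy. ring.
Qed.

Lemma cmod_tri3 (z p : C) : Cmod (z - RtoC 1)%C <= Cmod (p - z)%C + Cmod (p - RtoC 1)%C.
Proof.
replace (z - RtoC 1)%C with (- (p - z) + (p - RtoC 1))%C by ring.
eapply Rle_trans; first apply Cmod_triangle. rewrite Cmod_opp. lra.
Qed.

Theorem core (G : zmodType) (n r : nat) (chi : nat -> G -> C) (eps : R) (s : seq G) :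
  (1 < n)%nat -> (forall i, (i < r)%nat -> is_character (chi i)) -> 0 < eps ->
  (forall g, exists2 t, t \in s & exists h, (g - t = h *+ n)%G) ->
  exists r' chi' eps', (forall i, (i < r')%nat -> is_character (chi' i)) /\ 0 < eps' /\
    forall g, bohr_set r' chi' eps' g -> exists b, bohr_set r chi eps b /\ g = (b *+ n)%G.
Proof.
move=> Hn1 Hchi Heps Hfin.
have Hn0 : (0 < n)%nat by apply: ltnW.
pose H := fun g : G => exists h, g = (h *+ n)%G.
have HH : subgrp H.
{ split; first by exists 0%G; rewrite mul0rn.
  move=> x y [h1 ->] [h2 ->]. exists (h1 - h2)%G. by rewrite mulrnBl. }
have Hord : forall g, exists k, (0 < k)%nat /\ H (g *+ k)%G.
{ move=> g. exists n; split => //. by exists g. }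
have Hcov : forall g, H g \/ exists2 t, t \in s & H (g - t)%G.
{ move=> g. right. have [t Ht [h E]] := Hfin g. exists t => //. by exists h. }
have Hc : forall i : 'I_r, char_on (fun _ => True) (chi i).
{ move=> i. apply/is_char_on. apply Hchi. apply ltn_ord. }
pose Kp := fun k : G => (k *+ n)%G = 0%G.
pose Sp := fun y : Zvec r n => exists k, Kp k /\ forall i : 'I_r, chi i k = zz (y i).
have HS : subgrp Sp.
{ split.
  - exists 0%G. split; first by rewrite /Kp mul0rn.
    move=> i. rewrite ffunE zz_0. by apply: (char0 (subgrpT _) (Hc i)).
  - move=> x y [k1 [K1 E1]] [k2 [K2 E2]]. exists (k1 - k2)%G. split.
    + by rewrite /Kp mulrnBl K1 K2 subrr.
    + move=> i. have E3 := charB (x:=k1) (y:=k2) (subgrpT _) (Hc i) I I.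
      have E4 : (zz ((x - y)%G i) * zz (y i))%C = zz (x i).
      { by rewrite -zz_add // ffunE ffunE subrK. }
      have Hnz := unit_nz ((Hc i).1 k2 I).
      rewrite E2 in E3 Hnz. rewrite E1 -E4 in E3.
      transitivity (chi i (k1 - k2)%G * zz (y i) / zz (y i))%C; first by field.
      rewrite E3 /Cdiv -Cmult_assoc Cinv_r // Cmult_1_r. reflexivity. }
have HordS : forall y, exists k, (0 < k)%nat /\ Sp (y *+ k)%G.
{ move=> y. exists n; split => //. rewrite Ymuln //. exact HS.1. }
have HcovS : forall y, Sp y \/ exists2 t, t \in enum (Zvec r n) & Sp (y - t)%G.
{ move=> y. right. exists y; first by rewrite mem_enum. rewrite subrr. exact HS.1. }
have [TH HTH] : exists TH : Zvec r n -> Zvec r n -> C, forall a,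
    char_on (fun _ => True) (TH a) /\
    (~ Sp a -> (forall y, Sp y -> TH a y = RtoC 1) /\ TH a a <> RtoC 1).
{ apply: (@fchoice _ _ (fun a th => char_on (fun _ => True) th /\
    (~ Sp a -> (forall y, Sp y -> th y = RtoC 1) /\ th a <> RtoC 1))) => a.
  case: (classic (Sp a)) => Ha.
  - exists (fun _ => RtoC 1). split => //. split => *; [apply Cmod_1 | ring].
  - have [th [T1 T2 T3]] := separate HS HordS HcovS Ha.
    by exists th. }
have [M HM] : exists M : Zvec r n -> 'I_r -> nat, forall a i,
    (M a i < n)%nat /\ TH a (evec n i) = zeta n (M a i).
{ have : forall a, exists f : 'I_r -> nat, forall i,
    (f i < n)%nat /\ TH a (evec n i) = zeta n (f i).
  { move=> a. apply: (@fchoice _ _ (fun i j => (j < n)%nat /\ TH a (evec n i) = zeta n j)) => i.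
    have Hc1 := (HTH a).1.
    apply: root_exact => //; first by apply Hc1.1.
    rewrite -(charMn _ (subgrpT _) Hc1) // Ymuln //.
    by apply: (char0 (subgrpT _) Hc1). }
  by apply: (@fchoice _ _ (fun a f => forall i, (f i < n)%nat /\ TH a (evec n i) = zeta n (f i))). }
have THf : forall a y, TH a y = \cprod_(i < r) (zz (y i) ^ M a i)%C.
{ move=> a y. rewrite (char_decomp y (HTH a).1). apply eq_bigr => i _.
  rewrite (HM a i).2 /zz !zeta_pow. by rewrite mulnC. }
have KinS : forall k, Kp k -> exists y, Sp y /\ forall i : 'I_r, chi i k = zz (y i).
{ move=> k Hk.
  have [J HJ] : exists J : 'I_r -> nat, forall i : 'I_r, chi i k = zeta n (J i).
  { apply: (@fchoice 'I_r nat (fun i j => chi i k = zeta n j)) => i.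
    have Hc1 := Hc i.
    have [j [_ Hj]] : exists j, (j < n)%nat /\ chi i k = zeta n j.
    { apply: root_exact => //; first by apply Hc1.1.
      rewrite -(charMn _ (subgrpT _) Hc1) // Hk.
      by apply: (char0 (subgrpT _) Hc1). }
    by exists j. }
  have HKi : forall i : 'I_r, chi i k = zz (([ffun i => inZp (J i)] : Zvec r n) i).
  { move=> i. by rewrite ffunE zz_inZp // HJ. }
  exists ([ffun i => inZp (J i)] : Zvec r n). split => //. by exists k. }
have Kw : forall a, ~ Sp a -> forall k, Kp k -> \cprod_(i < r) (chi i k ^ M a i)%C = RtoC 1.
{ move=> a Ha k Hk. have [y [Hy Hyk]] := KinS k Hk.
  transitivity (TH a y); last by apply (((HTH a).2 Ha).1 y Hy).
  rewrite THf. apply eq_bigr => i _. by rewrite Hyk. }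
pose pre := fun g : G => match excluded_middle_informative (H g) with
  | left e => proj1_sig (constructive_indefinite_description _ e) | right _ => 0%G end.
have Hpre : forall g, H g -> g = (pre g *+ n)%G.
{ move=> g Hg. rewrite /pre. case: excluded_middle_informative => // e.
  by case: constructive_indefinite_description. }
pose Om := fun a g => \cprod_(i < r) (chi i (pre g) ^ M a i)%C.
have Omwd : forall a, ~ Sp a -> forall h, Om a (h *+ n)%G = \cprod_(i < r) (chi i h ^ M a i)%C.
{ move=> a Ha h. rewrite /Om.
  set h' := pre (h *+ n)%G.
  have Eh' : (h' *+ n = h *+ n)%G by rewrite /h' -Hpre //; exists h.
  have Hk : Kp (h - h')%G by rewrite /Kp mulrnBl Eh' subrr.
  have E : forall i : 'I_r, chi i h = (chi i (h - h')%G * chi i h')%C.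
  { move=> i. by rewrite (charB (subgrpT _) (Hc i)). }
  under [in RHS]eq_bigr => i _ do rewrite E Cpow_mult_l.
  rewrite big_split /= (Kw a Ha (h - h')%G Hk) Cmult_1_l. reflexivity. }
have OmC : forall a, ~ Sp a -> char_on H (Om a).
{ move=> a Ha. split.
  - move=> g _. apply unit_prod => i. apply unit_pow. by apply (Hc i).1.
  - move=> g1 g2 [h1 ->] [h2 ->]. rewrite -mulrnDl !Omwd //.
    rewrite -big_split /=. apply eq_bigr => i _.
    by rewrite (Hc i).2 // Cpow_mult_l. }
have [OM HOM] : exists OM : Zvec r n -> G -> C, forall a,
    char_on (fun _ => True) (OM a) /\
    (~ Sp a -> forall h, OM a (h *+ n)%G = \cprod_(i < r) (chi i h ^ M a i)%C).
{ apply: (@fchoice _ _ (fun a om => char_on (fun _ => True) om /\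
    (~ Sp a -> forall h, om (h *+ n)%G = \cprod_(i < r) (chi i h ^ M a i)%C))) => a.
  case: (classic (Sp a)) => Ha.
  - exists (fun _ => RtoC 1). split => //. split => *; [apply Cmod_1 | ring].
  - have [om [Hom1 Hom2]] := ext_all HH (OmC a Ha) Hord Hcov.
    exists om. split => // _ h. rewrite Hom2; last by exists h. by apply Omwd. }
have [SG HSG] : exists SG : G -> G -> C, forall t,
    char_on (fun _ => True) (SG t) /\
    (~ H t -> (forall g, H g -> SG t g = RtoC 1) /\ SG t t <> RtoC 1).
{ apply: (@fchoice _ _ (fun t th => char_on (fun _ => True) th /\
    (~ H t -> (forall g, H g -> th g = RtoC 1) /\ th t <> RtoC 1))) => t.
  case: (classic (H t)) => Ht.
  - exists (fun _ => RtoC 1). split => //. split => *; [apply Cmod_1 | ring].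
  - have [th [T1 T2 T3]] := separate HH Hord Hcov Ht.
    by exists th. }
set L := size s. set Ye := enum (Zvec r n). set q := size Ye.
pose fs := fun i => let t := nth 0%G s i in
  if excluded_middle_informative (H t) then 1 else Cmod (SG t t - RtoC 1)%C.
have [ds [Hds Hds']] : exists d, 0 < d /\ forall i, (i < L)%nat -> d <= fs i.
{ apply posmin => i _. rewrite /fs. case: excluded_middle_informative => Ht /=; first lra.
  apply/Cmod_gt_0 => E. apply ((HSG _).2 Ht).2.
  replace (SG (nth 0%G s i) (nth 0%G s i)) with ((SG (nth 0%G s i) (nth 0%G s i) - RtoC 1) + RtoC 1)%C by ring.
  rewrite E. ring. }
pose fo := fun i => let a := nth 0%G Ye i in
  if excluded_middle_informative (Sp a) then 1 else Cmod (TH a a - RtoC 1)%C.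
have [dom [Hdo Hdo']] : exists d, 0 < d /\ forall i, (i < q)%nat -> d <= fo i.
{ apply posmin => i _. rewrite /fo. case: excluded_middle_informative => Ht /=; first lra.
  apply/Cmod_gt_0 => E. apply ((HTH _).2 Ht).2.
  replace (TH (nth 0%G Ye i) (nth 0%G Ye i)) with ((TH (nth 0%G Ye i) (nth 0%G Ye i) - RtoC 1) + RtoC 1)%C by ring.
  rewrite E. ring. }
have Hrn : 0 < INR r * INR n + 1 by have Hp := Rmult_le_pos _ _ (pos_INR r) (pos_INR n); lra.
pose eps' := Rmin eps (Rmin ds (dom / (INR r * INR n + 1))).
have He1 : eps' <= eps by apply Rmin_l.
have He2 : eps' <= ds by apply: Rle_trans (Rmin_r _ _) _; apply Rmin_l.
have He3 : eps' * (INR r * INR n + 1) <= dom.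
{ have : eps' <= dom / (INR r * INR n + 1) by apply: Rle_trans (Rmin_r _ _) _; apply Rmin_r.
  move=> H3. apply (Rmult_le_compat_r (INR r * INR n + 1)) in H3; last lra.
  rewrite /Rdiv Rmult_assoc Rinv_l in H3; lra. }
have He0 : 0 < eps'.
{ apply Rmin_pos => //. apply Rmin_pos => //. apply Rdiv_lt_0_compat; lra. }
pose chi' := fun i => if (i < L)%nat then SG (nth 0%G s i)
  else if (i < L + r)%nat then chi (i - L)%nat else OM (nth 0%G Ye (i - L - r)%nat).
exists (L + r + q)%nat, chi', eps'. split; [|split] => //.
{ move=> i Hi. rewrite /chi'. case: ifP => H1; first by apply/is_char_on; apply HSG.
  case: ifP => H2; last by apply/is_char_on; apply HOM.
  apply Hchi. by rewrite ltn_subLR // leqNgt H1. }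
move=> g Hb.
have Hb' : forall i, (i < L + r + q)%nat -> Cmod (chi' i g - RtoC 1)%C < eps' by apply Hb.
have Hg : H g.
{ have [t Ht [h Eh]] := Hfin g.
  have Hgt : H (g - t)%G by exists h.
  case: (classic (H t)) => Htt.
  - have -> : g = ((g - t) + t)%G by rewrite subrK. by apply: subgrpD.
  - exfalso. set p := index t s.
    have Hp : (p < L)%nat by rewrite index_mem.
    have Hnth : nth 0%G s p = t by apply nth_index.
    have Hlt : (p < L + r + q)%nat by rewrite -addnA ltn_addr.
    have := Hb' p Hlt. rewrite /chi' Hp Hnth.
    have -> : SG t g = SG t t.
    { have -> : g = ((g - t) + t)%G by rewrite subrK.
      rewrite (HSG t).1.2 // (((HSG t).2 Htt).1 _ Hgt). ring. }
    have := Hds' p Hp. rewrite /fs Hnth.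
    case: excluded_middle_informative => //= _. lra. }
have [h0 Eg] := Hg.
have Hci : forall i : 'I_r, Cmod (chi i h0 ^ n - RtoC 1)%C < eps'.
{ move=> i. have Hlt : (L + i < L + r + q)%nat by rewrite -addnA ltn_add2l ltn_addr.
  have := Hb' _ Hlt. rewrite /chi'.
  have -> : (L + i < L)%nat = false by rewrite -{2}(addn0 L) ltn_add2l.
  rewrite ltn_add2l ltn_ord addKn Eg (charMn _ (subgrpT _) (Hc i)) //. }
have [J HJ] : exists J : 'I_r -> nat, forall i : 'I_r,
    (J i < n)%nat /\ Cmod (chi i h0 - zeta n (J i))%C <= Cmod (chi i h0 ^ n - RtoC 1)%C.
{ apply: (@fchoice 'I_r nat (fun i j => (j < n)%nat /\
     Cmod (chi i h0 - zeta n j)%C <= Cmod (chi i h0 ^ n - RtoC 1)%C)) => i.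
  apply root_approx => //. by apply (Hc i).1. }
pose a := ([ffun i => inZp (J i)] : Zvec r n).
have Ha : forall i : 'I_r, zz (a i) = zeta n (J i) by move=> i; rewrite ffunE zz_inZp.
case: (classic (Sp a)) => HSa.
- have [k [Hk Hka]] := HSa.
  exists (h0 - k)%G. split.
  + move=> i Hi. pose io := Ordinal Hi.
    have E := charB (x:=h0) (y:=k) (subgrpT _) (Hc io) I I.
    have Hu := (Hc io).1 k I.
    have : Cmod (chi io (h0 - k)%G - RtoC 1)%C = Cmod (chi io h0 - chi io k)%C.
    { by apply: cmod_shift Hu E. }
    move=> Hm. apply: Rle_lt_trans (Req_le _ _ Hm) _.
    rewrite Hka Ha. have := (HJ io).2. have := Hci io. lra.
  + by rewrite Eg mulrnBl Hk subr0.
- exfalso. set p := index a Ye.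
  have HaY : a \in Ye by rewrite mem_enum.
  have Hp : (p < q)%nat by rewrite index_mem.
  have Hnth : nth 0%G Ye p = a by apply nth_index.
  have Hlt : (L + r + p < L + r + q)%nat by rewrite ltn_add2l.
  have := Hb' _ Hlt. rewrite /chi'.
  have -> : (L + r + p < L)%nat = false by rewrite -addnA -{2}(addn0 L) ltn_add2l.
  have -> : (L + r + p < L + r)%nat = false by rewrite -{2}(addn0 (L + r)%nat) ltn_add2l.
  have -> : (L + r + p - L - r)%nat = p by rewrite -addnA addKn addKn.
  rewrite Hnth Eg ((HOM a).2 HSa) => HO.
  have HT : TH a a = \cprod_(i < r) (zeta n (J i) ^ M a i)%C.
  { rewrite THf. apply eq_bigr => i _. by rewrite Ha. }
  have Happ := approx_prod (F := fun i => chi i h0) (G := fun i => zeta n (J i)) (m := M a) (n := n) (e := eps')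
    (fun i => (Hc i).1 h0 I) (fun i => Cmod_zeta n (J i)) (fun i => ltnW (HM a i).1)
    (fun i => Rlt_le _ _ (Rle_lt_trans _ _ _ (HJ i).2 (Hci i))).
  have := Hdo' p Hp. rewrite /fo Hnth.
  case: excluded_middle_informative => //= _ Hd.
  have Htri : Cmod (TH a a - RtoC 1)%C <=
      Cmod (\cprod_(i < r) (chi i h0 ^ M a i) - \cprod_(i < r) (zeta n (J i) ^ M a i))%C
      + Cmod (\cprod_(i < r) (chi i h0 ^ M a i) - RtoC 1)%C.
  { rewrite HT. apply cmod_tri3. }
  have : Cmod (TH a a - RtoC 1)%C < INR r * INR n * eps' + eps'.
  { apply: Rle_lt_trans Htri _. apply Rplus_le_lt_compat => //. }
  lra.
Qed.

End ME.
Import ME.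

Module MF.
Set Implicit Arguments.
Unset Strict Implicit.
Delimit Scope ring_scope with G.
Local Open Scope R_scope.
Import GRing.Theory.

Lemma bohr_symm (G : zmodType) r (chi : nat -> G -> C) eps b :
  (forall i, (i < r)%nat -> is_character (chi i)) ->
  bohr_set r chi eps b -> bohr_set r chi eps (- b)%G.
Proof.
move=> Hchi Hb i Hi. have Hc := proj1 (is_char_on _) (Hchi i Hi).
have Hbi : Cmod (chi i b - RtoC 1)%C < eps by apply Hb.
change (Cmod (chi i (- b)%G - RtoC 1)%C < eps).
have E := charN (x:=b) (subgrpT _) Hc I.
rewrite (cmod_shift (Hc.1 b I) E).
replace (RtoC 1 - chi i b)%C with (- (chi i b - RtoC 1))%C by ring.
by rewrite Cmod_opp.
Qed.

Lemma bohr0 (G : zmodType) r (chi : nat -> G -> C) eps :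
  (forall i, (i < r)%nat -> is_character (chi i)) -> 0 < eps -> bohr_set r chi eps 0%G.
Proof.
move=> Hchi He i Hi. have Hc := proj1 (is_char_on _) (Hchi i Hi).
change (Cmod (chi i 0%G - RtoC 1)%C < eps).
rewrite (char0 (subgrpT _) Hc).
replace (RtoC 1 - RtoC 1)%C with (RtoC 0) by ring.
by rewrite Cmod_0.
Qed.

Lemma finite_order (G : zmodType) (s : seq G) : (forall g : G, g \in s) ->
  forall g : G, exists k, (0 < k)%nat /\ (g *+ k)%G = 0%G.
Proof.
move=> Hs g. apply NNPP => Hno.
have Hinj : {in iota 0 (size s).+1 &, injective (fun k => (g *+ k)%G)}.
{ move=> i j _ _ E. case: (ltngtP i j) => // H; exfalso; apply: Hno.
  - exists (j - i)%nat; split; first by rewrite subn_gt0.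
    by rewrite mulrnBr ?E ?subrr // ltnW.
  - exists (i - j)%nat; split; first by rewrite subn_gt0.
    by rewrite mulrnBr ?E ?subrr // ltnW. }
have Hu : uniq (map (fun k => (g *+ k)%G) (iota 0 (size s).+1)).
{ rewrite (map_inj_in_uniq Hinj). apply iota_uniq. }
have := uniq_leq_size Hu (fun x _ => Hs x).
by rewrite size_map size_iota ltnn.
Qed.

Lemma case0 (G : zmodType) (B : G -> Prop) (s : seq G) : bohr_nbhd B -> (forall g : G, g \in s) ->
  exists B' : G -> Prop, bohr_nbhd B' /\ (forall g : G, B' g -> exists2 b : G, B b & g = intmul b 0).
Proof.
move=> [r [chi [eps [Hchi [Heps HB]]]]] Hs.
pose H0 := fun g : G => g = 0%G.
have HH : subgrp H0 by split => // x y -> ->; rewrite subrr.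
have Hord : forall g, exists k, (0 < k)%nat /\ H0 (g *+ k)%G by apply finite_order with s.
have Hcov : forall g, H0 g \/ exists2 t, t \in s & H0 (g - t)%G.
{ move=> g. right. exists g => //. by rewrite /H0 subrr. }
have [SG HSG] : exists SG : G -> G -> C, forall t,
    char_on (fun _ => True) (SG t) /\
    (~ H0 t -> (forall g, H0 g -> SG t g = RtoC 1) /\ SG t t <> RtoC 1).
{ apply: (@fchoice _ _ (fun t th => char_on (fun _ => True) th /\
    (~ H0 t -> (forall g, H0 g -> th g = RtoC 1) /\ th t <> RtoC 1))) => t.
  case: (classic (H0 t)) => Ht.
  - exists (fun _ => RtoC 1). split => //. split => *; [apply Cmod_1 | ring].
  - have [th [T1 T2 T3]] := separate HH Hord Hcov Ht.
    by exists th. }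
pose fs := fun i => let t := nth 0%G s i in
  if excluded_middle_informative (H0 t) then 1 else Cmod (SG t t - RtoC 1)%C.
have [ds [Hds Hds']] : exists d, 0 < d /\ forall i, (i < size s)%nat -> d <= fs i.
{ apply posmin => i _. rewrite /fs. case: excluded_middle_informative => Ht /=; first lra.
  apply/Cmod_gt_0 => E. apply ((HSG _).2 Ht).2.
  replace (SG (nth 0%G s i) (nth 0%G s i)) with ((SG (nth 0%G s i) (nth 0%G s i) - RtoC 1) + RtoC 1)%C by ring.
  rewrite E. ring. }
exists (bohr_set (size s) (fun i => SG (nth 0%G s i)) ds). split.
- exists (size s), (fun i => SG (nth 0%G s i)), ds. split; [|split] => //.
  move=> i _. apply/is_char_on. apply HSG.
- move=> g Hg. exists 0%G; last first.
  + rewrite mulr0z. apply NNPP => Hg0.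
    set p := index g s.
    have Hp : (p < size s)%nat by rewrite index_mem.
    have Hnth : nth 0%G s p = g by apply nth_index.
    have : Cmod (SG g g - RtoC 1)%C < ds by have := Hg p Hp; rewrite Hnth.
    have := Hds' p Hp. rewrite /fs Hnth.
    case: excluded_middle_informative => //= _. lra.
  + apply HB. by apply bohr0.
Qed.

End MF.
Import MF.

Import GRing.Theory.
Delimit Scope ring_scope with G.

Theorem lemma1p6 (G : countZmodType) (B : G -> Prop) (c : int) :
  bohr_nbhd B ->
  finite_index (@mul_subgroup G c) ->
  exists B' : G -> Prop,
    bohr_nbhd B' /\ (forall g : G, B' g -> exists2 b : G, B b & g = intmul b c).
Proof.
move=> HBn [s Hs].
have [r [chi [eps [Hchi [Heps HB]]]]] := HBn.
case: c Hs => [n|m] Hs.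
- case: n Hs => [|[|n']] Hs.
  + apply: (case0 (s := s) HBn) => g. have [t Ht [h Eh]] := Hs g.
    move: Eh. rewrite mulr0z => /eqP. rewrite subr_eq0 => /eqP ->. done.
  + exists B. split => // g Hg. exists g => //.
  + have Hs' : forall g, exists2 t, t \in s & exists h, (g - t = h *+ n'.+2)%G.
    { move=> g. have [t Ht [h Eh]] := Hs g. exists t => //. exists h. by rewrite Eh. }
    have [r' [chi' [eps' [H1 [H2 H3]]]]] := core (n := n'.+2) (r := r) (chi := chi) (s := s) isT Hchi Heps Hs'.
    exists (bohr_set r' chi' eps'). split; first by exists r', chi', eps'.
    move=> g Hg. have [b [Hb Eb]] := H3 g Hg. exists b; first by apply HB.
    by rewrite -pmulrn.
- have Hs' : forall g, exists2 t, t \in s & exists h, (g - t = h *+ m.+1)%G.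
  { move=> g. have [t Ht [h Eh]] := Hs g. exists t => //. exists (- h)%G.
    rewrite Eh mulNrn. reflexivity. }
  case: m Hs Hs' => [|m'] Hs Hs'.
  + exists B. split => // g Hg. exists (- g)%G.
    * apply HB. apply bohr_symm => //. by apply HB.
    * symmetry; exact: (opprK g).
  + have [r' [chi' [eps' [H1 [H2 H3]]]]] := core (n := m'.+2) (r := r) (chi := chi) (s := s) isT Hchi Heps Hs'.
    exists (bohr_set r' chi' eps'). split; first by exists r', chi', eps'.
    move=> g Hg. have [b [Hb Eb]] := H3 g Hg. exists (- b)%G.
    * apply HB. by apply bohr_symm.
    * rewrite Eb. symmetry. change (- ((- b) *+ m'.+2) = b *+ m'.+2)%G. by rewrite mulNrn opprK.
Qed.
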